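(* Let $x\in(0,\infty)$. The unique default ABMN solution with central ratio $\frac{n_{-1}-n_0}{m_0-m_{-1}}=x$ is $\{(a^{\rm def}_i(x),b^{\rm def}_i(x),m^{\rm def}_i(x),n^{\rm def}_i(x)):i\in\mathbb{Z}\}$, where: $m^{\rm def}(x)$ is the increasing sequence with $\lim_{i\to-\infty}m^{\rm def}_i(x)=0$ and $m^{\rm def}_{k+1}(x)-m^{\rm def}_k(x)=\prod_{i=0}^k(c_i(x)-1)$ for $k\in\mathbb{Z}$; $n^{\rm def}(x)$ is the decreasing sequence with $\lim_{i\to\infty}n^{\rm def}_i(x)=0$ and $n^{\rm def}_k(x)-n^{\rm def}_{k+1}(x)=x\prod_{i=0}^k(d_i(x)-1)$ for $k\in\mathbb{Z}$; and, with $M_i=m^{\rm def}_{i+1}(x)-m^{\rm def}_{i-1}(x)$, $N_i=n^{\rm def}_{i-1}(x)-n^{\rm def}_{i+1}(x)$, $a^{\rm def}_i(x)=\frac{M_i^2N_i}{(M_i+N_i)^2}$ and $b^{\rm def}_i(x)=\frac{M_iN_i^2}{(M_i+N_i)^2}$.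
   Context: ABMN system on $\mathbb{Z}$: real variables $a_i,b_i\ge0$, $m_i,n_i$ with, for all $i$, $(a_i+b_i)(m_i+a_i)=a_im_{i+1}+b_im_{i-1}$, $(a_i+b_i)(n_i+b_i)=a_in_{i+1}+b_in_{i-1}$, $(a_i+b_i)^2=b_i(m_{i+1}-m_{i-1})$, $(a_i+b_i)^2=a_i(n_{i-1}-n_{i+1})$. A solution is positive if all $a_i,b_i>0$; default if positive with $\lim_{i\to-\infty}m_i=0$, $\lim_{i\to\infty}n_i=0$, $m_0-m_{-1}=1$. Functions: for $x>0$ let $\omega=\sqrt{8x+1}$, $c(x)=\frac{(\omega+3)^2}{16}$, $d(x)=\frac{(\omega+3)^2}{8(\omega+1)}$, $s(x)=\frac{(\omega-1)^2}{4(\omega+7)}$. Let $s_{-1}(x)=1/s(1/x)$, $s_0(x)=x$, and for $i\in\mathbb{N}_+$, $s_i=s\circ s_{i-1}$, $s_{-i}=s_{-1}\circ s_{-(i-1)}$. Set $c_j=c\circ s_j$, $d_j=d\circ s_j$ for $j\in\mathbb{Z}$. Product convention: $\prod_{i=0}^k h_i=h_0\cdots h_k$ for $k\ge0$, $=1$ for $k=-1$, and $=h_{k+1}^{-1}\cdots h_{-1}^{-1}$ for $k\le-2$. *)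

(* Defs.v *)
From Stdlib Require Import Reals Lra ZArith.
From Coquelicot Require Import Coquelicot.
Open Scope R_scope.

Definition omega (x : R) : R := sqrt (8 * x + 1).
Definition cfun (x : R) : R := (omega x + 3) ^ 2 / 16.
Definition dfun (x : R) : R := (omega x + 3) ^ 2 / (8 * (omega x + 1)).
Definition sfun (x : R) : R := (omega x - 1) ^ 2 / (4 * (omega x + 7)).
Definition sm1 (x : R) : R := / sfun (/ x).

(** s_j for j : Z : s_0 = id, s_i = s o s_{i-1}, s_{-i} = s_{-1} o s_{-(i-1)}. *)
Definition s_iter (j : Z) (x : R) : R :=
  match j with
  | Z0 => x
  | Zpos p => Nat.iter (Pos.to_nat p) sfun x
  | Zneg p => Nat.iter (Pos.to_nat p) sm1 x
  end.

Definition c_j (j : Z) (x : R) : R := cfun (s_iter j x).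
Definition d_j (j : Z) (x : R) : R := dfun (s_iter j x).

Fixpoint prod_up (h : nat -> R) (n : nat) : R :=
  match n with
  | O => 1
  | S n' => prod_up h n' * h n'
  end.

(** Product convention: zprod h k = h_0...h_k (k >= 0), 1 (k = -1),
    h_{k+1}^{-1} ... h_{-1}^{-1} (k <= -2). *)
Definition zprod (h : Z -> R) (k : Z) : R :=
  match k with
  | Z0 => prod_up (fun i => h (Z.of_nat i)) 1
  | Zpos p => prod_up (fun i => h (Z.of_nat i)) (S (Pos.to_nat p))
  | Zneg p => prod_up (fun i => / h (- Z.of_nat (S i))%Z) (Pos.to_nat p - 1)
  end.

Definition ABMN (a b m n : Z -> R) : Prop :=
  forall i : Z,
    0 <= a i /\ 0 <= b i /\
    (a i + b i) * (m i + a i) = a i * m (i + 1)%Z + b i * m (i - 1)%Z /\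
    (a i + b i) * (n i + b i) = a i * n (i + 1)%Z + b i * n (i - 1)%Z /\
    (a i + b i) ^ 2 = b i * (m (i + 1)%Z - m (i - 1)%Z) /\
    (a i + b i) ^ 2 = a i * (n (i - 1)%Z - n (i + 1)%Z).

Definition positive_sol (a b m n : Z -> R) : Prop :=
  ABMN a b m n /\ forall i, 0 < a i /\ 0 < b i.

Definition lim_pinf (u : Z -> R) (l : R) : Prop :=
  is_lim_seq (fun k : nat => u (Z.of_nat k)) l.
Definition lim_minf (u : Z -> R) (l : R) : Prop :=
  is_lim_seq (fun k : nat => u (- Z.of_nat k)%Z) l.

Definition default_sol (a b m n : Z -> R) : Prop :=
  positive_sol a b m n /\ lim_minf m 0 /\ lim_pinf n 0 /\
  m 0%Z - m (-1)%Z = 1.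

Definition central_ratio (m n : Z -> R) : R :=
  (n (-1)%Z - n 0%Z) / (m 0%Z - m (-1)%Z).

Definition is_mdef (x : R) (m : Z -> R) : Prop :=
  (forall k, m k < m (k + 1)%Z) /\ lim_minf m 0 /\
  forall k, m (k + 1)%Z - m k = zprod (fun i => c_j i x - 1) k.

Definition is_ndef (x : R) (n : Z -> R) : Prop :=
  (forall k, n (k + 1)%Z < n k) /\ lim_pinf n 0 /\
  forall k, n k - n (k + 1)%Z = x * zprod (fun i => d_j i x - 1) k.

Definition ab_from_mn (a b m n : Z -> R) : Prop :=
  forall i,
    let M := m (i + 1)%Z - m (i - 1)%Z in
    let N := n (i - 1)%Z - n (i + 1)%Z in
    a i = M ^ 2 * N / (M + N) ^ 2 /\ b i = M * N ^ 2 / (M + N) ^ 2.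

(* Main.v *)
Require Import Defs.
From Stdlib Require Import Reals ZArith Lra Lia Psatz FunctionalExtensionality.
From Coquelicot Require Import Coquelicot.
Open Scope R_scope.

Lemma omega_r r : 0 < r -> omega (r + 2*r^2) = 4*r+1.
Proof. intros. unfold omega. replace (8*(r+2*r^2)+1) with ((4*r+1)^2) by ring.
  apply sqrt_pow2. lra. Qed.

Lemma y_form y : 0 < y -> exists r, 0 < r /\ y = r + 2*r^2.
Proof. intros Hy. set (w := sqrt (8*y+1)).
  assert (h: sqrt 1 < w) by (unfold w; apply sqrt_lt_1; lra). rewrite sqrt_1 in h.
  assert (h2: w * w = 8*y+1) by (apply sqrt_sqrt; lra).
  exists ((w - 1)/4). split. lra. nra. Qed.

Lemma cfun_r r : 0 < r -> cfun (r + 2*r^2) = (1+r)^2.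
Proof. intros. unfold cfun. rewrite omega_r by lra. field. Qed.
Lemma dfun_r r : 0 < r -> dfun (r + 2*r^2) = (1+r)^2/(1+2*r).
Proof. intros. unfold dfun. rewrite omega_r by lra. field. lra. Qed.
Lemma sfun_r r : 0 < r -> sfun (r + 2*r^2) = r^2/(2+r).
Proof. intros. unfold sfun. rewrite omega_r by lra. field. lra. Qed.

Lemma sfun_pos y : 0 < y -> 0 < sfun y.
Proof. intros H. destruct (y_form y H) as [r [Hr ->]]. rewrite sfun_r by lra.
  apply Rdiv_lt_0_compat; nra. Qed.

Lemma sfun_half y : 0 < y -> sfun y < y / 2.
Proof. intros H. destruct (y_form y H) as [r [Hr ->]]. rewrite sfun_r by lra.
  apply Rmult_lt_reg_r with (2+r). lra. unfold Rdiv. rewrite Rmult_assoc, Rinv_l by lra. nra. Qed.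

Lemma sfun_inv z : 0 < z -> sfun (/ sfun z) = / z.
Proof. intros H. destruct (y_form z H) as [r [Hr ->]]. rewrite sfun_r by lra.
  replace (/ (r^2/(2+r))) with (/r + 2*(/r)^2) by (field; lra).
  rewrite sfun_r by (apply Rinv_0_lt_compat; lra). field. lra. Qed.

Lemma sm1_s z : 0 < z -> sm1 (sfun z) = z.
Proof. intros. unfold sm1. rewrite sfun_inv by auto. apply Rinv_inv. Qed.

Lemma s_sm1 y : 0 < y -> sfun (sm1 y) = y.
Proof. intros. unfold sm1. rewrite sfun_inv by (apply Rinv_0_lt_compat; auto). apply Rinv_inv. Qed.

Lemma sm1_pos y : 0 < y -> 0 < sm1 y.
Proof. intros. unfold sm1. apply Rinv_0_lt_compat, sfun_pos, Rinv_0_lt_compat; auto. Qed.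

Lemma sfun_inj y z : 0 < y -> 0 < z -> sfun y = sfun z -> y = z.
Proof. intros. rewrite <- (sm1_s y), <- (sm1_s z) by auto. congruence. Qed.

Lemma cm1_pos y : 0 < y -> 0 < cfun y - 1.
Proof. intros H. destruct (y_form y H) as [r [Hr ->]]. rewrite cfun_r by lra. nra. Qed.
Lemma dm1_pos y : 0 < y -> 0 < dfun y - 1.
Proof. intros H. destruct (y_form y H) as [r [Hr ->]]. rewrite dfun_r by lra.
  replace ((1+r)^2/(1+2*r) - 1) with (r^2/(1+2*r)) by (field; lra).
  apply Rdiv_lt_0_compat; nra. Qed.
Lemma cm1_ge y : 0 < y -> y / 2 <= cfun y - 1.
Proof. intros H. destruct (y_form y H) as [r [Hr ->]]. rewrite cfun_r by lra. nra. Qed.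
Lemma dm1_le y : 0 < y -> dfun y - 1 <= y.
Proof. intros H. destruct (y_form y H) as [r [Hr ->]]. rewrite dfun_r by lra.
  replace ((1+r)^2/(1+2*r) - 1) with (r^2/(1+2*r)) by (field; lra).
  apply Rmult_le_reg_r with (1+2*r). lra. unfold Rdiv. rewrite Rmult_assoc, Rinv_l by lra. nra. Qed.
Lemma key_id y : 0 < y -> y * (dfun y - 1) = (cfun y - 1) * sfun y.
Proof. intros H. destruct (y_form y H) as [r [Hr ->]]. rewrite dfun_r, cfun_r, sfun_r by lra.
  field. lra. Qed.

Lemma s_iter_nat n x : s_iter (Z.of_nat n) x = Nat.iter n sfun x.
Proof. destruct n. reflexivity. simpl. rewrite SuccNat2Pos.id_succ. reflexivity. Qed.
Lemma s_iter_negnat n x : s_iter (- Z.of_nat n) x = Nat.iter n sm1 x.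
Proof. destruct n. reflexivity. simpl. rewrite SuccNat2Pos.id_succ. reflexivity. Qed.

Lemma iter_sm1_pos n x : 0 < x -> 0 < Nat.iter n sm1 x.
Proof. intros. induction n; simpl; auto. apply sm1_pos; auto. Qed.
Lemma iter_sfun_pos n x : 0 < x -> 0 < Nat.iter n sfun x.
Proof. intros. induction n; simpl; auto. apply sfun_pos; auto. Qed.

Lemma Zcases (j : Z) : (exists n, j = Z.of_nat n) \/ (exists n, j = - Z.of_nat (S n))%Z.
Proof. destruct (Z_le_gt_dec 0 j).
  - left. exists (Z.to_nat j). lia.
  - right. exists (Z.to_nat (- j - 1)). lia. Qed.

Lemma s_iter_pos j x : 0 < x -> 0 < s_iter j x.
Proof. intros. destruct (Zcases j) as [[n ->]|[n ->]].
  rewrite s_iter_nat; apply iter_sfun_pos; auto.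
  rewrite s_iter_negnat; apply iter_sm1_pos; auto. Qed.

Lemma s_iter_succ j x : 0 < x -> s_iter (j + 1) x = sfun (s_iter j x).
Proof. intros. destruct (Zcases j) as [[n ->]|[n ->]].
  - replace (Z.of_nat n + 1)%Z with (Z.of_nat (S n)) by lia.
    rewrite !s_iter_nat. reflexivity.
  - replace (- Z.of_nat (S n) + 1)%Z with (- Z.of_nat n)%Z by lia.
    rewrite !s_iter_negnat. simpl. rewrite s_sm1; auto. apply iter_sm1_pos; auto. Qed.

Lemma zprod_nat h n : zprod h (Z.of_nat n) = prod_up (fun i => h (Z.of_nat i)) (S n).
Proof. destruct n. reflexivity. simpl (Z.of_nat (S n)). unfold zprod. rewrite SuccNat2Pos.id_succ. reflexivity. Qed.
Lemma zprod_neg h n : zprod h (- Z.of_nat (S n)) = prod_up (fun i => / h (- Z.of_nat (S i))%Z) n.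
Proof. simpl (Z.of_nat (S n)). unfold zprod. simpl Z.opp. cbv iota beta. rewrite SuccNat2Pos.id_succ. simpl. rewrite Nat.sub_0_r. reflexivity. Qed.

Lemma zprod_succ h k : (forall i, h i <> 0) -> zprod h (k + 1) = zprod h k * h (k + 1)%Z.
Proof. intros Hh. destruct (Zcases k) as [[n ->]|[n ->]].
  - replace (Z.of_nat n + 1)%Z with (Z.of_nat (S n)) by lia.
    rewrite !zprod_nat. reflexivity.
  - destruct n.
    + simpl. reflexivity.
    + replace (- Z.of_nat (S (S n)) + 1)%Z with (- Z.of_nat (S n))%Z by lia.
      rewrite !zprod_neg. simpl. field. apply Hh. Qed.

Lemma prod_up_pos h n : (forall i, 0 < h i) -> 0 < prod_up h n.
Proof. intros. induction n; simpl. lra. apply Rmult_lt_0_compat; auto. Qed.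

Lemma zprod_pos h k : (forall i, 0 < h i) -> 0 < zprod h k.
Proof. intros Hh. destruct (Zcases k) as [[n ->]|[n ->]].
  rewrite zprod_nat. apply prod_up_pos. auto.
  rewrite zprod_neg. apply prod_up_pos. intros. apply Rinv_0_lt_compat; auto. Qed.

Lemma Zind2 (Pr : Z -> Prop) : Pr 0%Z -> (forall k, Pr k -> Pr (k+1)%Z) ->
  (forall k, Pr (k+1)%Z -> Pr k) -> forall k, Pr k.
Proof. intros H0 Hu Hd. apply Z.peano_ind; auto.
  intros. apply Hd. rewrite Z.add_1_r, Z.succ_pred. auto. Qed.

Definition Sx (x : R) (j : Z) := s_iter j x.
Definition Px (x : R) (k : Z) := zprod (fun i => c_j i x - 1) k.
Definition Qx (x : R) (k : Z) := x * zprod (fun i => d_j i x - 1) k.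

Section Fix.
Variable x : R.
Hypothesis hx : 0 < x.

Lemma S_pos j : 0 < Sx x j.
Proof. apply s_iter_pos; auto. Qed.
Lemma S_succ j : Sx x (j+1) = sfun (Sx x j).
Proof. apply s_iter_succ; auto. Qed.
Lemma C_pos j : 0 < c_j j x - 1.
Proof. apply cm1_pos, S_pos. Qed.
Lemma D_pos j : 0 < d_j j x - 1.
Proof. apply dm1_pos, S_pos. Qed.
Lemma P_pos k : 0 < Px x k.
Proof. apply zprod_pos. apply C_pos. Qed.
Lemma Q_pos k : 0 < Qx x k.
Proof. apply Rmult_lt_0_compat; auto. apply zprod_pos. apply D_pos. Qed.
Lemma P_succ k : Px x (k+1) = Px x k * (cfun (Sx x (k+1)) - 1).
Proof. unfold Px. rewrite zprod_succ. reflexivity. intros i. generalize (C_pos i). lra. Qed.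
Lemma Q_succ k : Qx x (k+1) = Qx x k * (dfun (Sx x (k+1)) - 1).
Proof. unfold Qx. rewrite zprod_succ. unfold d_j, Sx. ring. intros i. generalize (D_pos i). lra. Qed.
Lemma P_m1 : Px x (-1) = 1.
Proof. reflexivity. Qed.
Lemma Q_m1 : Qx x (-1) = x.
Proof. unfold Qx. change (zprod (fun i : Z => d_j i x - 1) (-1)) with 1. ring. Qed.

Lemma P_pred k : Px x k = Px x (k-1) * (cfun (Sx x k) - 1).
Proof. pose proof (P_succ (k-1)). rewrite Z.sub_add in H. exact H. Qed.
Lemma Q_pred k : Qx x k = Qx x (k-1) * (dfun (Sx x k) - 1).
Proof. pose proof (Q_succ (k-1)). rewrite Z.sub_add in H. exact H. Qed.

Lemma ratio0 j : Qx x (j-1) = Px x (j-1) * Sx x j.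
Proof. pattern j. apply Zind2; clear j.
  - change (0-1)%Z with (-1)%Z. rewrite Q_m1, P_m1. unfold Sx. simpl. ring.
  - intros j IH. rewrite Z.add_simpl_r, S_succ, Q_pred, P_pred, IH.
    rewrite Rmult_assoc, key_id by apply S_pos. ring.
  - intros j IH. rewrite Z.add_simpl_r, S_succ, Q_pred, P_pred in IH.
    rewrite Rmult_assoc, <- key_id in IH by apply S_pos.
    apply Rmult_eq_reg_r with (dfun (Sx x j) - 1). rewrite IH. ring.
    generalize (dm1_pos _ (S_pos j)). lra. Qed.

Lemma ratio k : Qx x k = Px x k * Sx x (k+1).
Proof. rewrite <- (Z.add_simpl_r k 1) at 1 2. apply ratio0. Qed.

Lemma S_up j t : Sx x (j + Z.of_nat t) <= Sx x j * (/2)^t.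
Proof. induction t. simpl. rewrite Z.add_0_r. lra.
  replace (j + Z.of_nat (S t))%Z with (j + Z.of_nat t + 1)%Z by lia.
  rewrite S_succ. pose proof (sfun_half _ (S_pos (j + Z.of_nat t))). change ((/2)^(S t)) with (/2 * (/2)^t).
  replace (Sx x j * (/2 * (/2)^t)) with ((Sx x j * (/2)^t)/2) by field. lra. Qed.

Lemma S_down j t : Sx x j * 2^t <= Sx x (j - Z.of_nat t).
Proof. induction t. simpl. rewrite Z.sub_0_r. lra.
  pose proof (S_succ (j - Z.of_nat (S t))).
  replace (j - Z.of_nat (S t) + 1)%Z with (j - Z.of_nat t)%Z in H by lia.
  pose proof (sfun_half _ (S_pos (j - Z.of_nat (S t)))). change (2^(S t)) with (2 * 2^t).
  replace (Sx x j * (2 * 2^t)) with (2 * (Sx x j * 2^t)) by ring. lra. Qed.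
End Fix.

Definition mdef (x : R) (k : Z) := Series (fun t : nat => Px x (k - 1 - Z.of_nat t)).
Definition ndef (x : R) (k : Z) := Series (fun t : nat => Qx x (k + Z.of_nat t)).

Lemma geom_lim c : is_lim_seq (fun n => c * (/2)^n) 0.
Proof. pose proof (is_lim_seq_scal_l _ c _ (is_lim_seq_geom (/2) ltac:(rewrite Rabs_pos_eq; lra))).
  simpl in H. rewrite Rmult_0_r in H. exact H. Qed.

Lemma ex_pos_DA (a : nat -> R) c : (forall n, 0 < a n) ->
  (forall n, a (S n) / a n <= c * (/2)^n) -> ex_series a.
Proof. intros Hp Hb. apply ex_series_ext with (fun n => Rabs (a n)).
  intros. rewrite Rabs_pos_eq; auto. left; auto.
  apply ex_series_DAlembert with 0. lra. intros n. generalize (Hp n); lra.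
  apply is_lim_seq_le_le with (fun _ => 0) (fun n => c * (/2)^n).
  intros n. rewrite Rabs_pos_eq. split. left. apply Rdiv_lt_0_compat; auto. auto.
  left. apply Rdiv_lt_0_compat; auto.
  apply is_lim_seq_const. apply geom_lim. Qed.

Section Fix.
Variable x : R.
Hypothesis hx : 0 < x.

Lemma ex_m k : ex_series (fun t : nat => Px x (k - 1 - Z.of_nat t)).
Proof. apply ex_pos_DA with (2 / Sx x (k-1)).
  intros. apply P_pos; auto.
  intros n. rewrite (P_pred x hx (k - 1 - Z.of_nat n)).
  replace (k - 1 - Z.of_nat (S n))%Z with (k - 1 - Z.of_nat n - 1)%Z by lia.
  set (y := Sx x (k - 1 - Z.of_nat n)). set (p := Px x (k - 1 - Z.of_nat n - 1)).
  assert (Hp : 0 < p) by (apply P_pos; auto).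
  assert (Hy : 0 < y) by (apply S_pos; auto).
  pose proof (cm1_ge y Hy). pose proof (S_down x hx (k-1) n). fold y in H0.
  pose proof (S_pos x hx (k-1)).
  assert (h2 : 0 < 2^n) by (apply pow_lt; lra).
  replace (p / (p * (cfun y - 1))) with (/ (cfun y - 1)) by (field; lra).
  rewrite pow_inv.
  apply Rle_trans with (2 / y).
  - apply Rmult_le_reg_r with (cfun y - 1). lra. rewrite Rinv_l by lra.
    apply Rmult_le_reg_r with y. lra. unfold Rdiv. field_simplify; lra.
  - unfold Rdiv. rewrite Rmult_assoc, <- Rinv_mult. apply Rmult_le_compat_l. lra.
    apply Rinv_le_contravar. nra. lra. Qed.

Lemma ex_n k : ex_series (fun t : nat => Qx x (k + Z.of_nat t)).
Proof. apply ex_pos_DA with (Sx x (k+1)).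
  intros. apply Q_pos; auto.
  intros n. replace (k + Z.of_nat (S n))%Z with (k + Z.of_nat n + 1)%Z by lia.
  rewrite (Q_succ x hx).
  pose proof (Q_pos x hx (k + Z.of_nat n)).
  replace (Qx x (k + Z.of_nat n) * (dfun (Sx x (k + Z.of_nat n + 1)) - 1) / Qx x (k + Z.of_nat n))
    with (dfun (Sx x (k + Z.of_nat n + 1)) - 1) by (field; lra).
  eapply Rle_trans. apply dm1_le, S_pos; auto.
  replace (k + Z.of_nat n + 1)%Z with (k + 1 + Z.of_nat n)%Z by lia. apply S_up; auto. Qed.

Lemma mdef_diff k : mdef x (k+1) - mdef x k = Px x k.
Proof. unfold mdef. rewrite (Series_incr_1 _ (ex_m (k+1))).
  rewrite (Series_ext (fun t => Px x (k + 1 - 1 - Z.of_nat (S t))) (fun t => Px x (k - 1 - Z.of_nat t))).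
  replace (k + 1 - 1 - Z.of_nat 0)%Z with k by lia. ring.
  intros t. f_equal. lia. Qed.

Lemma ndef_diff k : ndef x k - ndef x (k+1) = Qx x k.
Proof. unfold ndef. rewrite (Series_incr_1 _ (ex_n k)).
  rewrite (Series_ext (fun t => Qx x (k + Z.of_nat (S t))) (fun t => Qx x (k + 1 + Z.of_nat t))).
  replace (k + Z.of_nat 0)%Z with k by lia. ring.
  intros t. f_equal. lia. Qed.

Lemma sum_lim (u : nat -> R) : ex_series u -> is_lim_seq (sum_f_R0 u) (Series u).
Proof. intros H. apply is_lim_seq_ext with (sum_n u). intros; apply sum_n_Reals.
  exact (Series_correct _ H). Qed.

Lemma mdef_lim : lim_minf (mdef x) 0.
Proof. unfold lim_minf. apply is_lim_seq_incr_1.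
  set (u := fun t : nat => Px x (0 - 1 - Z.of_nat t)).
  apply is_lim_seq_ext with (fun n => Series u - sum_f_R0 u n).
  - intros n. rewrite (Series_incr_n u (S n)) by (lia || apply ex_m).
    simpl pred. unfold mdef, u. ring_simplify. apply Series_ext. intros t. f_equal. lia.
  - pose proof (is_lim_seq_minus' _ _ _ _ (is_lim_seq_const (Series u)) (sum_lim u (ex_m 0))).
    rewrite Rminus_eq_0 in H. exact H. Qed.

Lemma ndef_lim : lim_pinf (ndef x) 0.
Proof. unfold lim_pinf. apply is_lim_seq_incr_1.
  set (u := fun t : nat => Qx x (0 + Z.of_nat t)).
  apply is_lim_seq_ext with (fun n => Series u - sum_f_R0 u n).
  - intros n. rewrite (Series_incr_n u (S n)) by (lia || apply ex_n).
    simpl pred. unfold ndef, u. ring_simplify. apply Series_ext. intros t. f_equal. lia.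
  - pose proof (is_lim_seq_minus' _ _ _ _ (is_lim_seq_const (Series u)) (sum_lim u (ex_n 0))).
    rewrite Rminus_eq_0 in H. exact H. Qed.
End Fix.

Lemma lin_m A B p q : 0 < A -> 0 < B -> (A+B)*A = A*p - B*q -> (A+B)^2 = B*(p+q) ->
  q = A^2/B /\ p = B + 2*A.
Proof. intros HA HB e1 e3.
  assert (E : (A+B)*(A^2 - B*q) = A*((A+B)^2) - B*((A+B)*A) - A*B*(p+q) + B*(A*p - B*q)) by ring.
  rewrite e3, e1 in E. ring_simplify in E.
  assert (E2 : (A+B)*(A^2 - B*q) = 0) by lra.
  apply Rmult_integral in E2. destruct E2 as [E2|E2]. lra.
  assert (hq : q = A^2/B). { apply Rmult_eq_reg_l with B. 2: lra. replace (B*(A^2/B)) with (A^2) by (field; lra). lra. }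
  split; auto. subst q. apply Rmult_eq_reg_l with A. 2: lra.
  replace (A*p) with ((A+B)*A + B*(A^2/B)) by lra. field. lra. Qed.

Lemma local_fwd A B mi m1 m0 ni n1 n0 : 0 < A -> 0 < B ->
  (A+B)*(mi + A) = A*m1 + B*m0 ->
  (A+B)*(ni + B) = A*n1 + B*n0 ->
  (A+B)^2 = B*(m1 - m0) ->
  (A+B)^2 = A*(n0 - n1) ->
  mi - m0 = A^2/B /\ m1 - mi = B + 2*A /\ n0 - ni = A + 2*B /\ ni - n1 = B^2/A.
Proof. intros HA HB e1 e2 e3 e4.
  assert (X1 : (A+B)*A = A*(m1 - mi) - B*(mi - m0)) by lra.
  assert (X3 : (B+A)*B = B*(n0 - ni) - A*(ni - n1)) by lra.
  assert (X4 : (B+A)^2 = A*((n0 - ni) + (ni - n1))) by (rewrite Rplus_comm, e4; f_equal; ring).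
  assert (X2 : (A+B)^2 = B*((m1 - mi) + (mi - m0))) by (rewrite e3; f_equal; ring).
  destruct (lin_m A B _ _ HA HB X1 X2) as [h1 h2].
  destruct (lin_m B A _ _ HB HA X3 X4) as [h3 h4].
  repeat split; auto. Qed.

Lemma local_pkg A B p q u v : 0 < A -> 0 < B ->
  q = A^2/B -> p = B + 2*A -> v = A + 2*B -> u = B^2/A ->
  0 < q /\ 0 < v /\ 0 < v/q /\ p = q * (cfun (v/q) - 1) /\ u = v * (dfun (v/q) - 1) /\ sfun (v/q) = u / p /\
  A = (p+q)^2*(u+v)/((p+q)+(u+v))^2 /\ B = (p+q)*(u+v)^2/((p+q)+(u+v))^2.
Proof. intros HA HB Hq Hp Hv Hu.
  set (r := B/A). assert (Hr : 0 < r) by (apply Rdiv_lt_0_compat; auto).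
  assert (Hy : v/q = r + 2*r^2) by (rewrite Hv, Hq; unfold r; field; lra).
  rewrite Hy, cfun_r, dfun_r, sfun_r by auto. rewrite Hq, Hp, Hv, Hu. unfold r.
  assert (0 < A^2/B) by (apply Rdiv_lt_0_compat; nra).
  repeat split; try lra; try (field; lra).
  all: assert (HS: 0 < (A+B)^2) by (apply pow_lt; lra).
  - unfold r in Hr. generalize (pow_lt (B/A) 2 Hr). lra.
  - replace (B + 2*A + A^2/B) with ((A+B)^2/B) by (field; lra).
    replace (B^2/A + (A + 2*B)) with ((A+B)^2/A) by (field; lra).
    field. repeat split; apply Rgt_not_eq; nra.
  - replace (B + 2*A + A^2/B) with ((A+B)^2/B) by (field; lra).
    replace (B^2/A + (A + 2*B)) with ((A+B)^2/A) by (field; lra).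
    field. repeat split; apply Rgt_not_eq; nra.
Qed.


Lemma local_conv q y A B mi m1 m0 ni n1 n0 : 0 < q -> 0 < y ->
  mi - m0 = q -> m1 - mi = q*(cfun y - 1) -> n0 - ni = q*y -> ni - n1 = q*y*(dfun y - 1) ->
  A = (m1-m0)^2*(n0-n1)/((m1-m0)+(n0-n1))^2 -> B = (m1-m0)*(n0-n1)^2/((m1-m0)+(n0-n1))^2 ->
  0 < A /\ 0 < B /\
  (A+B)*(mi + A) = A*m1 + B*m0 /\
  (A+B)*(ni + B) = A*n1 + B*n0 /\
  (A+B)^2 = B*(m1 - m0) /\
  (A+B)^2 = A*(n0 - n1).
Proof. intros Hq Hy h1 h2 h3 h4 hA hB.
  destruct (y_form y Hy) as [r [Hr ->]]. rewrite cfun_r in h2 by auto. rewrite dfun_r in h4 by auto.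
  assert (EM : m1 - m0 = q*(1+r)^2) by lra.
  assert (EN : n0 - n1 = q*r*(1+r)^2).
  { replace (n0 - n1) with ((n0 - ni) + (ni - n1)) by ring. rewrite h3, h4. field. lra. }
  assert (P1 : 0 < q*(1+r)^2) by (apply Rmult_lt_0_compat; [lra| apply pow_lt; lra]).
  assert (P2 : 0 < q*r*(1+r)^2) by (apply Rmult_lt_0_compat; [nra| apply pow_lt; lra]).
  rewrite EM, EN in hA, hB.
  assert (HA : A = q*r) by (rewrite hA; field; repeat split; apply Rgt_not_eq; nra).
  assert (HB : B = q*r^2) by (rewrite hB; field; repeat split; apply Rgt_not_eq; nra).
  assert (em0 : m0 = mi - q) by lra.
  assert (em1 : m1 = mi + q*((1+r)^2 - 1)) by lra.
  assert (en0 : n0 = ni + q*(r+2*r^2)) by lra.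
  assert (en1 : n1 = ni - q*(r+2*r^2)*((1+r)^2/(1+2*r) - 1)) by lra.
  rewrite EM, EN, HA, HB, em0, em1, en0, en1.
  repeat split; try nra; field; nra.
Qed.

Lemma const_lim (e : nat -> R) (c l : R) : (forall n, e n = c) -> is_lim_seq e l -> c = l.
Proof. intros He Hl. assert (H2 : is_lim_seq e c) by (apply is_lim_seq_ext with (fun _ => c); auto; apply is_lim_seq_const).
  apply is_lim_seq_unique in Hl. apply is_lim_seq_unique in H2. rewrite Hl in H2. injection H2. auto. Qed.

Lemma same_diff (f g : Z -> R) : (forall k, f (k+1)%Z - f k = g (k+1)%Z - g k) ->
  forall k, f k - g k = f 0%Z - g 0%Z.
Proof. intros H k. pattern k. apply Zind2; clear k.
  - reflexivity.
  - intros k IH. rewrite <- IH. generalize (H k). lra.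
  - intros k IH. rewrite <- IH. generalize (H k). lra. Qed.

Lemma uniq_minf (f g : Z -> R) : (forall k, f (k+1)%Z - f k = g (k+1)%Z - g k) ->
  lim_minf f 0 -> lim_minf g 0 -> f = g.
Proof. intros H Hf Hg. pose proof (same_diff f g H) as Hc.
  pose proof (is_lim_seq_minus' _ _ _ _ Hf Hg). rewrite Rminus_0_r in H0.
  pose proof (const_lim _ (f 0%Z - g 0%Z) _ (fun n => Hc _) H0).
  apply functional_extensionality. intros k. specialize (Hc k). lra. Qed.

Lemma uniq_pinf (f g : Z -> R) : (forall k, f (k+1)%Z - f k = g (k+1)%Z - g k) ->
  lim_pinf f 0 -> lim_pinf g 0 -> f = g.
Proof. intros H Hf Hg. pose proof (same_diff f g H) as Hc.
  pose proof (is_lim_seq_minus' _ _ _ _ Hf Hg). rewrite Rminus_0_r in H0.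
  pose proof (const_lim _ (f 0%Z - g 0%Z) _ (fun n => Hc _) H0).
  apply functional_extensionality. intros k. specialize (Hc k). lra. Qed.

Section Fix.
Variable x : R.
Hypothesis hx : 0 < x.

Lemma pkg_at a b m n j : positive_sol a b m n ->
  let p := m (j+1)%Z - m j in let q := m j - m (j-1)%Z in
  let u := n j - n (j+1)%Z in let v := n (j-1)%Z - n j in
  0 < q /\ 0 < v /\ 0 < v/q /\ p = q * (cfun (v/q) - 1) /\ u = v * (dfun (v/q) - 1) /\ sfun (v/q) = u / p /\
  a j = (p+q)^2*(u+v)/((p+q)+(u+v))^2 /\ b j = (p+q)*(u+v)^2/((p+q)+(u+v))^2.
Proof. intros [H Hp] p q u v. destruct (Hp j) as [HA HB]. destruct (H j) as [_ [_ [e1 [e2 [e3 e4]]]]].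
  destruct (local_fwd _ _ _ _ _ _ _ _ HA HB e1 e2 e3 e4) as [h1 [h2 [h3 h4]]].
  apply local_pkg; auto. Qed.

Lemma fwd_diff a b m n : default_sol a b m n -> central_ratio m n = x ->
  forall j, m j - m (j-1)%Z = Px x (j-1) /\ n (j-1)%Z - n j = Qx x (j-1).
Proof. intros [Hpos [_ [_ H01]]] Hr j. pattern j. apply Zind2; clear j.
  - change (0-1)%Z with (-1)%Z. rewrite P_m1, Q_m1. split; auto.
    unfold central_ratio in Hr. rewrite H01 in Hr. lra.
  - intros j [IH1 IH2]. rewrite Z.add_simpl_r.
    destruct (pkg_at a b m n j Hpos) as [hq [hv [hy [hp [hu _]]]]].
    rewrite IH1, IH2 in *. rewrite (ratio0 x hx j) in *.
    replace (Px x (j-1) * Sx x j / Px x (j-1)) with (Sx x j) in * by (field; apply Rgt_not_eq, P_pos; auto).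
    rewrite (P_pred x hx j), (Q_pred x hx j), (ratio0 x hx j). split; lra.
  - intros j [IH1 IH2]. rewrite Z.add_simpl_r in IH1, IH2.
    destruct (pkg_at a b m n j Hpos) as [hq [hv [hy [hp [hu [hs _]]]]]].
    rewrite IH1 in hp, hs. assert (IH2' : n j - n (j+1)%Z = Qx x j) by lra. rewrite IH2' in hu, hs.
    rewrite (ratio x hx j), S_succ in hs by auto.
    replace (Px x j * sfun (Sx x j) / Px x j) with (sfun (Sx x j)) in hs by (field; apply Rgt_not_eq, P_pos; auto).
    apply sfun_inj in hs; auto. 2: apply S_pos; auto.
    rewrite hs in hp, hu. rewrite (P_pred x hx j) in hp. rewrite (Q_pred x hx j) in hu.
    pose proof (cm1_pos _ (S_pos x hx j)). pose proof (dm1_pos _ (S_pos x hx j)).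
    split.
    + apply Rmult_eq_reg_r with (cfun (Sx x j) - 1); lra.
    + apply Rmult_eq_reg_r with (dfun (Sx x j) - 1); lra.
Qed.

Lemma fwd a b m n : default_sol a b m n -> central_ratio m n = x ->
  m = mdef x /\ n = ndef x /\ ab_from_mn a b m n.
Proof. intros Hd Hr. pose proof (fwd_diff a b m n Hd Hr) as HD.
  destruct Hd as [Hpos [Hm [Hn H01]]]. split; [|split].
  - apply uniq_minf; auto. 2: apply mdef_lim; auto.
    intros k. rewrite mdef_diff by auto. destruct (HD (k+1)%Z) as [h _]. rewrite Z.add_simpl_r in h. exact h.
  - apply uniq_pinf; auto. 2: apply ndef_lim; auto.
    intros k. pose proof (ndef_diff x hx k). destruct (HD (k+1)%Z) as [_ h]. rewrite Z.add_simpl_r in h. lra.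
  - intros i. cbv zeta. destruct (pkg_at a b m n i Hpos) as [_ [_ [_ [_ [_ [_ [ha hb]]]]]]].
    rewrite ha, hb. split; f_equal; f_equal; try ring; f_equal; try ring; f_equal; ring.
Qed.

Lemma conv a b : ab_from_mn a b (mdef x) (ndef x) ->
  default_sol a b (mdef x) (ndef x) /\ central_ratio (mdef x) (ndef x) = x.
Proof. intros Hab.
  assert (D1 : forall i, mdef x i - mdef x (i-1)%Z = Px x (i-1)).
  { intros i. rewrite <- (mdef_diff x hx (i-1)). rewrite Z.sub_add. reflexivity. }
  assert (D2 : forall i, ndef x (i-1)%Z - ndef x i = Qx x (i-1)).
  { intros i. rewrite <- (ndef_diff x hx (i-1)). rewrite Z.sub_add. reflexivity. }
  assert (L : forall i, 0 < a i /\ 0 < b i /\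
    (a i + b i) * (mdef x i + a i) = a i * mdef x (i + 1)%Z + b i * mdef x (i - 1)%Z /\
    (a i + b i) * (ndef x i + b i) = a i * ndef x (i + 1)%Z + b i * ndef x (i - 1)%Z /\
    (a i + b i) ^ 2 = b i * (mdef x (i + 1)%Z - mdef x (i - 1)%Z) /\
    (a i + b i) ^ 2 = a i * (ndef x (i - 1)%Z - ndef x (i + 1)%Z)).
  { intros i. destruct (Hab i) as [ha hb].
    apply (local_conv (Px x (i-1)) (Sx x i)).
    - apply P_pos; auto.
    - apply S_pos; auto.
    - apply D1.
    - rewrite mdef_diff by auto. apply P_pred; auto.
    - rewrite D2. apply ratio0; auto.
    - rewrite ndef_diff, Q_pred, ratio0 by auto. reflexivity.
    - exact ha.
    - exact hb. }
  split; [split; [split|]|].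
  - intros i. destruct (L i) as [h1 [h2 h3]]. split; [lra|split; [lra|exact h3]].
  - intros i. destruct (L i) as [h1 [h2 _]]. auto.
  - split. apply mdef_lim; auto. split. apply ndef_lim; auto.
    pose proof (D1 0%Z). change (0-1)%Z with (-1)%Z in H. rewrite H. apply P_m1.
  - unfold central_ratio. pose proof (D1 0%Z). pose proof (D2 0%Z). change (0-1)%Z with (-1)%Z in H, H0.
    rewrite H, H0, P_m1, Q_m1. field.
Qed.

Lemma mdef_is : is_mdef x (mdef x).
Proof. split; [|split].
  - intros k. pose proof (mdef_diff x hx k). pose proof (P_pos x hx k). lra.
  - apply mdef_lim; auto.
  - intros k. rewrite mdef_diff by auto. reflexivity. Qed.

Lemma ndef_is : is_ndef x (ndef x).
Proof. split; [|split].
  - intros k. pose proof (ndef_diff x hx k). pose proof (Q_pos x hx k). lra.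
  - apply ndef_lim; auto.
  - intros k. rewrite ndef_diff by auto. reflexivity. Qed.

Lemma is_mdef_eq m : is_mdef x m -> m = mdef x.
Proof. intros [_ [Hl Hd]]. apply uniq_minf; auto. 2: apply mdef_lim; auto.
  intros k. rewrite Hd, mdef_diff by auto. reflexivity. Qed.

Lemma is_ndef_eq n : is_ndef x n -> n = ndef x.
Proof. intros [_ [Hl Hd]]. apply uniq_pinf; auto. 2: apply ndef_lim; auto.
  intros k. pose proof (Hd k). pose proof (ndef_diff x hx k). unfold Qx in H0. lra. Qed.
End Fix.

Theorem mainTheorem10 (x : R) (hx : 0 < x) :
  (exists a b m n : Z -> R, default_sol a b m n /\ central_ratio m n = x) /\
  (forall a b m n a' b' m' n' : Z -> R,
      default_sol a b m n -> central_ratio m n = x ->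
      default_sol a' b' m' n' -> central_ratio m' n' = x ->
      a = a' /\ b = b' /\ m = m' /\ n = n') /\
  (forall a b m n : Z -> R,
      (default_sol a b m n /\ central_ratio m n = x) <->
      (is_mdef x m /\ is_ndef x n /\ ab_from_mn a b m n)).
Proof. split; [|split].
  - set (M := fun i => mdef x (i+1)%Z - mdef x (i-1)%Z).
    set (N := fun i => ndef x (i-1)%Z - ndef x (i+1)%Z).
    exists (fun i => M i ^ 2 * N i / (M i + N i)^2), (fun i => M i * N i ^ 2 / (M i + N i)^2), (mdef x), (ndef x).
    apply conv; auto. intros i. split; reflexivity.
  - intros a b m n a' b' m' n' H1 H2 H3 H4.
    destruct (fwd x hx _ _ _ _ H1 H2) as [-> [-> Hab]].
    destruct (fwd x hx _ _ _ _ H3 H4) as [-> [-> Hab']].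
    split; [|split; [|split]]; auto; apply functional_extensionality; intros i;
      destruct (Hab i) as [ha hb]; destruct (Hab' i) as [ha' hb']; cbv zeta in *; congruence.
  - intros a b m n. split.
    + intros [H1 H2]. destruct (fwd x hx _ _ _ _ H1 H2) as [-> [-> Hab]].
      split; [apply mdef_is|split; [apply ndef_is|]]; auto.
    + intros [Hm [Hn Hab]]. rewrite (is_mdef_eq x hx m Hm), (is_ndef_eq x hx n Hn) in *.
      apply conv; auto.
Qed.
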